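(* Let $A$ and $B$ be nonempty closed subsets of a complete metric space $(X,\rho)$ such that the ordered pair $(A,B)$ has the $BUC$ property. Let $T:A\cup B\to A\cup B$ be a cyclic map and suppose there exists $k\in(0,1)$ such that $$\rho(Tx,Ty)\le k\max\{\rho(x,y),\rho(x,Tx),\rho(y,Ty)\}+(1-k)\,\mathrm{dist}(A,B)\quad\text{for all }x\in A,\ y\in B.$$ Then $T$ has a unique best proximity point $x$ in $A$, and for every $x_0\in A$ the sequence $\{T^{2n}x_0\}_{n=1}^\infty$ converges to $x$. Moreover $T$ has at least one best proximity point in $B$, and if the ordered pair $(B,A)$ also has the $BUC$ property, this best proximity point in $B$ is unique.
   Context: $\mathrm{dist}(A,B)=\inf\{\rho(a,b):a\in A,\ b\in B\}$. A map $T:A\cup B\to A\cup B$ is cyclic if $T(A)\subseteq B$ and $T(B)\subseteq A$. A point $x\in A$ (resp. $x\in B$) is a best proximity point of $T$ in $A$ (resp. in $B$) if $\rho(x,Tx)=\mathrm{dist}(A,B)$. The ordered pair $(A,B)$ has the bounded $UC$ property ($BUC$) if for all bounded sequences $\{x_n\},\{z_n\}\subset A$ and every sequence $\{y_n\}\subset B$ with $\lim_n\rho(x_n,y_n)=\lim_n\rho(z_n,y_n)=\mathrm{dist}(A,B)$ one has $\lim_n\rho(x_n,z_n)=0$; the property for $(B,A)$ is defined with the roles of $A$ and $B$ interchanged. *)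

(* Defs.v *)
From Stdlib Require Import Reals.
Open Scope R_scope.

Definition is_metric {X : Type} (d : X -> X -> R) : Prop :=
  (forall x y, 0 <= d x y) /\
  (forall x y, d x y = 0 <-> x = y) /\
  (forall x y, d x y = d y x) /\
  (forall x y z, d x z <= d x y + d y z).

Definition converges {X : Type} (d : X -> X -> R) (u : nat -> X) (x : X) : Prop :=
  forall eps, 0 < eps -> exists N, forall n, (N <= n)%nat -> d (u n) x < eps.

Definition cauchy_seq {X : Type} (d : X -> X -> R) (u : nat -> X) : Prop :=
  forall eps, 0 < eps -> exists N, forall m n, (N <= m)%nat -> (N <= n)%nat ->
    d (u m) (u n) < eps.

Definition complete_metric {X : Type} (d : X -> X -> R) : Prop :=
  forall u, cauchy_seq d u -> exists x, converges d u x.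

Definition closed_subset {X : Type} (d : X -> X -> R) (A : X -> Prop) : Prop :=
  forall u x, (forall n, A (u n)) -> converges d u x -> A x.

Definition nonempty {X : Type} (A : X -> Prop) : Prop := exists x, A x.

Definition bounded_seq {X : Type} (d : X -> X -> R) (u : nat -> X) : Prop :=
  exists M, forall m n, d (u m) (u n) <= M.

Definition is_dist {X : Type} (d : X -> X -> R) (A B : X -> Prop) (delta : R) : Prop :=
  (forall a b, A a -> B b -> delta <= d a b) /\
  (forall m, (forall a b, A a -> B b -> m <= d a b) -> m <= delta).

Definition BUC {X : Type} (d : X -> X -> R) (A B : X -> Prop) : Prop :=
  forall delta, is_dist d A B delta ->
  forall (x z y : nat -> X),
    bounded_seq d x -> bounded_seq d z ->
    (forall n, A (x n)) -> (forall n, A (z n)) -> (forall n, B (y n)) ->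
    Un_cv (fun n => d (x n) (y n)) delta ->
    Un_cv (fun n => d (z n) (y n)) delta ->
    Un_cv (fun n => d (x n) (z n)) 0.

Definition cyclic_map {X : Type} (A B : X -> Prop) (T : X -> X) : Prop :=
  (forall x, A x -> B (T x)) /\ (forall x, B x -> A (T x)).

(* Main.v *)
Require Import Defs.
From Stdlib Require Import Reals Lra Lia Classical ClassicalEpsilon.
Open Scope R_scope.

Definition opp {X : Type} (A B : X -> Prop) (p q : X) : Prop :=
  (A p /\ B q) \/ (B p /\ A q).

Definition contr {X : Type} (d : X -> X -> R) (A B : X -> Prop) (T : X -> X) (k delta : R) :=
  forall p q, opp A B p q ->
    d (T p) (T q) <= k * Rmax (d p q) (Rmax (d p (T p)) (d q (T q))) + (1 - k) * delta.

Definition Hy {X : Type} (d : X -> X -> R) (A B : X -> Prop) (T : X -> X) (k delta : R) :=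
  is_metric d /\ cyclic_map A B T /\ (0 < k < 1) /\ is_dist d A B delta /\ contr d A B T k delta.

Lemma Hy_sym {X : Type} (d : X -> X -> R) A B T k delta :
  Hy d A B T k delta -> Hy d B A T k delta.
Proof.
  intros [Hm [[c1 c2] [Hk [[i1 i2] Hc]]]].
  destruct Hm as [m1 [m2 [m3 m4]]].
  split; [exact (conj m1 (conj m2 (conj m3 m4)))|]. split; [split; auto|]. split; [auto|]. split.
  - split.
    + intros a b Ha Hb. rewrite m3. auto.
    + intros m Hmm. apply i2. intros a b Ha Hb. rewrite m3. auto.
  - intros p q Hpq. apply Hc. unfold opp in *; tauto.
Qed.

Lemma opp_dist {X : Type} (d : X -> X -> R) A B T k delta p q :
  Hy d A B T k delta -> opp A B p q -> delta <= d p q.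
Proof.
  intros [[m1 [m2 [m3 m4]]] [_ [_ [[i1 i2] _]]]] [[Hp Hq]|[Hp Hq]].
  - auto.
  - rewrite m3; auto.
Qed.

Lemma delta_nonneg {X : Type} (d : X -> X -> R) A B T k delta :
  Hy d A B T k delta -> 0 <= delta.
Proof.
  intros [[m1 _] [_ [_ [[i1 i2] _]]]]. apply i2. intros; apply m1.
Qed.

Lemma opp_T {X : Type} (d : X -> X -> R) A B T k delta p q :
  Hy d A B T k delta -> opp A B p q -> opp A B (T p) (T q).
Proof.
  intros [_ [[c1 c2] _]] [[Hp Hq]|[Hp Hq]]; [right|left]; split; auto.
Qed.

Lemma opp_self {X : Type} (d : X -> X -> R) A B T k delta p :
  Hy d A B T k delta -> (A p \/ B p) -> opp A B p (T p).
Proof.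
  intros [_ [[c1 c2] _]] [Hp|Hp]; [left|right]; split; auto.
Qed.

Lemma opp_iter {X : Type} (d : X -> X -> R) A B T k delta p q n :
  Hy d A B T k delta -> opp A B p q -> opp A B (Nat.iter n T p) (Nat.iter n T q).
Proof.
  intros H Hpq. induction n; simpl; auto. eapply opp_T; eauto.
Qed.

Lemma AB_iter {X : Type} (d : X -> X -> R) A B T k delta p n :
  Hy d A B T k delta -> (A p \/ B p) -> (A (Nat.iter n T p) \/ B (Nat.iter n T p)).
Proof.
  intros [_ [[c1 c2] _]] Hp. induction n; simpl; auto. destruct IHn; auto.
Qed.

Lemma pow_01 k n : 0 <= k <= 1 -> 0 <= k ^ n <= 1.
Proof.
  intros Hk. induction n; simpl; [lra|]. split; nra.
Qed.

Lemma D_decay {X : Type} (d : X -> X -> R) A B T k delta p :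
  Hy d A B T k delta -> (A p \/ B p) -> forall n,
  d (Nat.iter n T p) (Nat.iter (S n) T p) <= delta + k ^ n * (d p (T p) - delta).
Proof.
  intros H Hp. pose proof H as [_ [_ [Hk [_ Hc]]]].
  induction n.
  - simpl. lra.
  - set (a := Nat.iter n T p).
    assert (Ha : A a \/ B a) by (eapply AB_iter; eauto).
    assert (Ho : opp A B a (T a)) by (eapply opp_self; eauto).
    assert (HD : delta <= d (T a) (T (T a))).
    { eapply opp_dist; eauto. eapply opp_T; eauto. }
    assert (HD0 : delta <= d a (T a)) by (eapply opp_dist; eauto).
    pose proof (Hc _ _ Ho) as Hc1.
    change (Nat.iter (S n) T p) with (T a) in *.
    change (Nat.iter (S (S n)) T p) with (T (T a)).
    simpl pow.
    assert (d (T a) (T (T a)) <= k * d a (T a) + (1 - k) * delta).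
    { destruct (Rle_dec (d (T a) (T (T a))) (d a (T a))).
      - assert (Rmax (d a (T a)) (Rmax (d a (T a)) (d (T a) (T (T a)))) <= d a (T a)).
        { apply Rmax_lub; [lra|apply Rmax_lub; lra]. }
        nra.
      - assert (Rmax (d a (T a)) (Rmax (d a (T a)) (d (T a) (T (T a)))) <= d (T a) (T (T a))).
        { apply Rmax_lub; [lra|apply Rmax_lub; lra]. }
        assert (d (T a) (T (T a)) <= delta) by nra. nra. }
    change (Nat.iter n T p) with a in IHn.
    assert (k * d a (T a) <= k * (delta + k ^ n * (d p (T p) - delta))) by (apply Rmult_le_compat_l; lra).
    lra.
Qed.

Lemma pair_decay {X : Type} (d : X -> X -> R) A B T k delta p q c :
  Hy d A B T k delta -> opp A B p q -> 0 <= c -> d p q <= delta + c ->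
  d p (T p) <= delta + c -> d q (T q) <= delta + c ->
  forall j, d (Nat.iter j T p) (Nat.iter j T q) <= delta + k ^ j * c.
Proof.
  intros H Hpq Hc0 H0 Hp Hq. pose proof H as [_ [_ [Hk [_ Hc]]]].
  assert (Ap : A p \/ B p) by (destruct Hpq as [[]|[]]; auto).
  assert (Aq : A q \/ B q) by (destruct Hpq as [[]|[]]; auto).
  pose proof (D_decay d A B T k delta p H Ap) as Dp.
  pose proof (D_decay d A B T k delta q H Aq) as Dq.
  induction j.
  - simpl. lra.
  - set (a := Nat.iter j T p) in *. set (b := Nat.iter j T q) in *.
    change (Nat.iter (S j) T p) with (T a). change (Nat.iter (S j) T q) with (T b).
    assert (Hab : opp A B a b) by (eapply opp_iter; eauto).
    pose proof (Hc _ _ Hab) as Hc1.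
    pose proof (pow_01 k j ltac:(lra)) as Hkj.
    assert (d a (T a) <= delta + k ^ j * c).
    { specialize (Dp j). change (Nat.iter j T p) with a in Dp. change (Nat.iter (S j) T p) with (T a) in Dp.
      assert (k ^ j * (d p (T p) - delta) <= k ^ j * c) by (apply Rmult_le_compat_l; lra). lra. }
    assert (d b (T b) <= delta + k ^ j * c).
    { specialize (Dq j). change (Nat.iter j T q) with b in Dq. change (Nat.iter (S j) T q) with (T b) in Dq.
      assert (k ^ j * (d q (T q) - delta) <= k ^ j * c) by (apply Rmult_le_compat_l; lra). lra. }
    assert (Rmax (d a b) (Rmax (d a (T a)) (d b (T b))) <= delta + k ^ j * c)
      by (apply Rmax_lub; [lra|apply Rmax_lub; lra]).
    assert (k * Rmax (d a b) (Rmax (d a (T a)) (d b (T b))) <= k * (delta + k ^ j * c))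
      by (apply Rmult_le_compat_l; lra).
    simpl pow. lra.
Qed.

Lemma parity {X : Type} (d : X -> X -> R) A B T k delta p :
  Hy d A B T k delta -> A p -> forall m,
  A (Nat.iter (2 * m) T p) /\ B (Nat.iter (2 * m + 1) T p).
Proof.
  intros [_ [[c1 c2] _]] Hp m. induction m.
  - simpl. split; auto.
  - replace (2 * S m)%nat with (S (S (2 * m))) by lia.
    replace (S (S (2 * m)) + 1)%nat with (S (S (S (2 * m)))) by lia.
    replace (2 * m + 1)%nat with (S (2 * m)) in IHm by lia. simpl in *.
    destruct IHm. split; auto.
Qed.

Lemma pow_small k c eps : 0 <= k < 1 -> 0 <= c -> 0 < eps ->
  exists N, forall i, (N <= i)%nat -> k ^ i * c < eps.
Proof.
  intros Hk Hc He.
  assert (Hy0 : 0 < eps / (c + 1)) by (apply Rdiv_lt_0_compat; lra).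
  destruct (pow_lt_1_zero k ltac:(rewrite Rabs_pos_eq; lra) _ Hy0) as [N HN].
  exists N. intros i Hi. specialize (HN i Hi).
  pose proof (pow_01 k i ltac:(lra)) as Hki.
  rewrite Rabs_pos_eq in HN by lra.
  assert (k ^ i * (c + 1) < eps / (c + 1) * (c + 1)) by (apply Rmult_lt_compat_r; lra).
  replace (eps / (c + 1) * (c + 1)) with eps in H by (field; lra).
  nra.
Qed.

Lemma le_eps a : (forall eps, 0 < eps -> a <= 3 * eps) -> a <= 0.
Proof.
  intros H. destruct (Rle_dec a 0); auto.
  specialize (H (a / 6) ltac:(lra)). lra.
Qed.

Lemma Un_cv_const c l : Un_cv (fun _ => c) l -> c = l.
Proof.
  intros H. apply (UL_sequence (fun _ => c)); auto.
  intros eps He. exists 0%nat. intros. unfold R_dist. rewrite Rminus_diag, Rabs_R0. auto.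
Qed.

Lemma Un_cv_c c : Un_cv (fun _ => c) c.
Proof.
  intros eps He. exists 0%nat. intros. unfold R_dist. rewrite Rminus_diag, Rabs_R0. auto.
Qed.

Lemma orbit_bounds {X : Type} (d : X -> X -> R) A B T k delta x0 :
  Hy d A B T k delta -> A x0 ->
  exists K, 0 <= K /\
   (forall n, d (T x0) (Nat.iter (2 * n) T x0) <= K).
Proof.
  intros H Hx0. pose proof H as [[m1 [m2 [m3 m4]]] [[c1 c2] [Hk [_ Hc]]]].
  pose proof (delta_nonneg _ _ _ _ _ _ H) as Hd.
  set (D0 := d x0 (T x0)).
  assert (HD : forall i, d (Nat.iter i T x0) (Nat.iter (S i) T x0) <= D0).
  { intro i. pose proof (D_decay d A B T k delta x0 H (or_introl Hx0) i) as Hi.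
    pose proof (pow_01 k i ltac:(lra)).
    assert (delta <= D0) by (eapply opp_dist; eauto; left; split; auto).
    fold D0 in Hi.
    assert (k ^ i * (D0 - delta) <= 1 * (D0 - delta)) by (apply Rmult_le_compat_r; lra).
    lra. }
  exists ((2 * D0 + delta) / (1 - k)). split.
  { pose proof (m1 x0 (T x0)). fold D0 in H0. unfold Rdiv. apply Rmult_le_pos; [lra|]. left. apply Rinv_0_lt_compat. lra. }
  intro n. apply (Rmult_le_reg_l (1 - k)); [lra|].
  replace ((1 - k) * ((2 * D0 + delta) / (1 - k))) with (2 * D0 + delta) by (field; lra).
  pose proof (m1 x0 (T x0)). fold D0 in H0.
  destruct n.
  - simpl. rewrite m3. fold D0. nra.
  - destruct (parity d A B T k delta x0 H Hx0 n) as [_ Bq].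
    set (q := Nat.iter (2 * n + 1) T x0) in *.
    replace (Nat.iter (2 * S n) T x0) with (T q)
      by (unfold q; replace (2 * S n)%nat with (S (2 * n + 1)) by lia; reflexivity).
    assert (Ho : opp A B x0 q) by (left; split; auto).
    pose proof (Hc _ _ Ho) as Hc1.
    assert (Dq : d q (T q) <= D0).
    { pose proof (HD (2 * n + 1)%nat). fold q in H1. exact H1. }
    pose proof (m1 (T x0) (T q)).
    assert (d x0 q <= D0 + d (T x0) (T q) + D0).
    { pose proof (m4 x0 (T x0) q). pose proof (m4 (T x0) (T q) q).
      rewrite (m3 (T q) q) in H3. fold D0 in H2. lra. }
    assert (Rmax (d x0 q) (Rmax (d x0 (T x0)) (d q (T q))) <= 2 * D0 + d (T x0) (T q)).
    { fold D0. apply Rmax_lub; [lra|apply Rmax_lub; lra]. }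
    assert (k * Rmax (d x0 q) (Rmax (d x0 (T x0)) (d q (T q))) <= k * (2 * D0 + d (T x0) (T q)))
      by (apply Rmult_le_compat_l; lra).
    nra.
Qed.

Lemma D_le_D0 {X : Type} (d : X -> X -> R) A B T k delta x0 :
  Hy d A B T k delta -> (A x0 \/ B x0) -> forall i,
  d (Nat.iter i T x0) (Nat.iter (S i) T x0) <= d x0 (T x0).
Proof.
  intros H Hx0 i. pose proof H as [_ [_ [Hk _]]].
  pose proof (D_decay d A B T k delta x0 H Hx0 i) as Hi.
  pose proof (pow_01 k i ltac:(lra)).
  assert (delta <= d x0 (T x0)) by (eapply opp_dist; eauto; eapply opp_self; eauto).
  assert (k ^ i * (d x0 (T x0) - delta) <= 1 * (d x0 (T x0) - delta)) by (apply Rmult_le_compat_r; lra).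
  lra.
Qed.

Lemma cross_decay {X : Type} (d : X -> X -> R) A B T k delta x0 :
  Hy d A B T k delta -> A x0 ->
  exists K, 0 <= K /\
   (forall m n, d (Nat.iter (2 * m) T x0) (Nat.iter (2 * n) T x0) <= 2 * K) /\
   (forall eps, 0 < eps -> exists N, forall m n, (N <= m)%nat -> (N <= n)%nat ->
      d (Nat.iter (2 * m) T x0) (Nat.iter (2 * n + 1) T x0) < delta + eps).
Proof.
  intros H Hx0. pose proof H as [[m1 [m2 [m3 m4]]] [[c1 c2] [Hk [_ Hc]]]].
  pose proof (delta_nonneg _ _ _ _ _ _ H) as Hd.
  destruct (orbit_bounds d A B T k delta x0 H Hx0) as [K [HK0 HK]].
  pose proof (D_le_D0 d A B T k delta x0 H (or_introl Hx0)) as HD.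
  set (D0 := d x0 (T x0)) in *.
  assert (HD0 : 0 <= D0) by apply m1.
  exists K. split; [auto|]. split.
  { intros m n. pose proof (m4 (Nat.iter (2 * m) T x0) (T x0) (Nat.iter (2 * n) T x0)).
    rewrite (m3 (Nat.iter (2 * m) T x0) (T x0)) in H0. pose proof (HK m). pose proof (HK n). lra. }
  set (E := 2 * K + D0).
  assert (Hcross : forall a b, d (Nat.iter (2 * a) T x0) (Nat.iter (2 * b + 1) T x0) <= delta + E).
  { intros a b.
    pose proof (m4 (Nat.iter (2 * a) T x0) (T x0) (Nat.iter (2 * b + 1) T x0)).
    pose proof (m4 (T x0) (Nat.iter (2 * (S b)) T x0) (Nat.iter (2 * b + 1) T x0)).
    pose proof (HD (2 * b + 1)%nat).
    replace (S (2 * b + 1)) with (2 * S b)%nat in H2 by lia.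
    rewrite (m3 (Nat.iter (2 * a) T x0) (T x0)) in H0. rewrite (m3 (Nat.iter (2 * S b) T x0) (Nat.iter (2 * b + 1) T x0)) in H1.
    pose proof (HK a). pose proof (HK (S b)). unfold E. lra. }
  intros eps Heps.
  destruct (pow_small k E eps ltac:(lra) ltac:(unfold E; lra) Heps) as [N HN].
  exists N. intros m n Hm Hn.
  set (p := Nat.iter (2 * (m - N)) T x0). set (q := Nat.iter (2 * (n - N) + 1) T x0).
  destruct (parity d A B T k delta x0 H Hx0 (m - N)) as [Ap _].
  destruct (parity d A B T k delta x0 H Hx0 (n - N)) as [_ Bq].
  fold p in Ap. fold q in Bq.
  assert (Hpq : opp A B p q) by (left; split; auto).
  assert (Hp : d p (T p) <= delta + E) by (assert (d p (T p) <= D0) by exact (HD (2 * (m - N))%nat); unfold E; lra).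
  assert (Hq : d q (T q) <= delta + E) by (assert (d q (T q) <= D0) by exact (HD (2 * (n - N) + 1)%nat); unfold E; lra).
  pose proof (pair_decay d A B T k delta p q E H Hpq ltac:(unfold E; lra) (Hcross _ _) Hp Hq (2 * N)) as Hj.
  unfold p, q in Hj. rewrite <- !Nat.iter_add in Hj.
  replace (2 * N + 2 * (m - N))%nat with (2 * m)%nat in Hj by lia.
  replace (2 * N + (2 * (n - N) + 1))%nat with (2 * n + 1)%nat in Hj by lia.
  specialize (HN (2 * N)%nat ltac:(lia)). lra.
Qed.

Lemma orbit_conv {X : Type} (d : X -> X -> R) A B T k delta x0 :
  Hy d A B T k delta -> BUC d A B -> complete_metric d -> closed_subset d A -> A x0 ->
  exists x, A x /\ d x (T x) = delta /\ converges d (fun n => Nat.iter (2 * n) T x0) x.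
Proof.
  intros H Hbuc Hcomp Hcl Hx0.
  pose proof H as [[m1 [m2 [m3 m4]]] [[c1 c2] [Hk [Hdist Hc]]]].
  pose proof (delta_nonneg _ _ _ _ _ _ H) as Hd.
  destruct (cross_decay d A B T k delta x0 H Hx0) as [K [HK0 [Hbd Hcr]]].
  set (u := fun n => Nat.iter (2 * n) T x0).
  assert (HuA : forall n, A (u n)) by (intro n; apply (parity d A B T k delta x0 H Hx0 n)).
  assert (HvB : forall n, B (Nat.iter (2 * n + 1) T x0)) by (intro n; apply (parity d A B T k delta x0 H Hx0 n)).
  assert (Hlow : forall m n, delta <= d (u m) (Nat.iter (2 * n + 1) T x0))
    by (intros; eapply opp_dist; eauto; left; split; auto).
  assert (Hcau : cauchy_seq d u).
  { intros eps Heps. apply NNPP. intro Hn.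
    assert (Hall : forall N, exists mn : nat * nat, (N <= fst mn)%nat /\ (N <= snd mn)%nat /\
                     eps <= d (u (fst mn)) (u (snd mn))).
    { intro N. apply NNPP. intro Hc'. apply Hn. exists N. intros m n Hm Hn'.
      apply Rnot_le_lt. intro Hle. apply Hc'. exists (m, n). simpl. auto. }
    set (f := fun N => proj1_sig (constructive_indefinite_description _ (Hall N))).
    assert (Hf : forall N, (N <= fst (f N))%nat /\ (N <= snd (f N))%nat /\
                     eps <= d (u (fst (f N))) (u (snd (f N))))
      by (intro N; exact (proj2_sig (constructive_indefinite_description _ (Hall N)))).
    assert (Hbu : bounded_seq d u) by (exists (2 * K); intros; apply Hbd).
    assert (Hb1 : bounded_seq d (fun j => u (fst (f j)))) by (exists (2 * K); intros; apply Hbd).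
    assert (Hb2 : bounded_seq d (fun j => u (snd (f j)))) by (exists (2 * K); intros; apply Hbd).
    assert (Hcv : forall g : nat -> nat, (forall j, (j <= g j)%nat) ->
       Un_cv (fun j => d (u (g j)) (Nat.iter (2 * snd (f j) + 1) T x0)) delta).
    { intros g Hg e He. destruct (Hcr e He) as [N HN]. exists N. intros j Hj.
      unfold R_dist. apply Rabs_def1.
      - pose proof (HN (g j) (snd (f j)) ltac:(specialize (Hg j); lia) ltac:(destruct (Hf j) as [_ [? _]]; lia)).
        unfold u in *. lra.
      - pose proof (Hlow (g j) (snd (f j))). lra. }
    pose proof (Hbuc delta Hdist (fun j => u (fst (f j))) (fun j => u (snd (f j)))
      (fun j => Nat.iter (2 * snd (f j) + 1) T x0) Hb1 Hb2
      (fun j => HuA _) (fun j => HuA _) (fun j => HvB _)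
      (Hcv (fun j => fst (f j)) (fun j => proj1 (Hf j)))
      (Hcv (fun j => snd (f j)) (fun j => proj1 (proj2 (Hf j))))) as Hz.
    destruct (Hz eps Heps) as [J HJ]. specialize (HJ J ltac:(lia)).
    unfold R_dist in HJ. rewrite Rminus_0_r, Rabs_pos_eq in HJ by apply m1.
    destruct (Hf J) as [_ [_ HJ2]]. lra. }
  destruct (Hcomp u Hcau) as [x Hx].
  assert (Ax : A x) by (exact (Hcl u x HuA Hx)).
  exists x. split; [auto|]. split; [|exact Hx].
  set (s := d x (T x)).
  assert (Hs1 : delta <= s) by (eapply opp_dist; eauto; eapply opp_self; eauto).
  set (D0 := d x0 (T x0)).
  assert (HD0 : delta <= D0) by (eapply opp_dist; eauto; eapply opp_self; eauto).
  assert (Hle : (1 - k) * (s - delta) <= 0).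
  { apply le_eps. intros eps Heps.
    destruct (Hx eps Heps) as [N1 HN1].
    destruct (pow_small k (D0 - delta) eps ltac:(lra) ltac:(lra) Heps) as [N2 HN2].
    pose proof (D_decay d A B T k delta x0 H (or_introl Hx0)) as HDd. fold D0 in HDd.
    set (n := (N1 + N2)%nat).
    set (q := Nat.iter (2 * n + 1) T x0).
    assert (Bq : B q) by apply HvB.
    assert (HTq : T q = u (S n)) by (unfold q, u; replace (2 * S n)%nat with (S (2 * n + 1)) by lia; reflexivity).
    assert (Hqx : d q x < delta + 2 * eps).
    { pose proof (m4 q (u n) x). pose proof (HN1 n ltac:(unfold n; lia)).
      pose proof (HDd (2 * n)%nat). pose proof (HN2 (2 * n)%nat ltac:(unfold n; lia)).
      rewrite (m3 q (u n)) in H0. unfold u, q in *.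
      replace (2 * n + 1)%nat with (S (2 * n)) in * by lia. lra. }
    assert (HqTq : d q (T q) < delta + eps).
    { pose proof (HDd (2 * n + 1)%nat). pose proof (HN2 (2 * n + 1)%nat ltac:(unfold n; lia)).
      change (d q (T q)) with (d (Nat.iter (2 * n + 1) T x0) (Nat.iter (S (2 * n + 1)) T x0)). lra. }
    assert (Ho : opp A B q x) by (right; split; auto).
    pose proof (Hc _ _ Ho) as Hc1.
    assert (Hs : s <= d x (T q) + d (T q) (T x)) by apply m4.
    assert (HxTq : d x (T q) < eps) by (rewrite HTq, m3; apply HN1; unfold n; lia).
    fold s in Hc1.
    destruct (Rle_dec s (delta + 2 * eps)).
    - nra.
    - assert (Rmax (d q x) (Rmax (d q (T q)) s) <= s) by (apply Rmax_lub; [lra|apply Rmax_lub; lra]).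
      assert (k * Rmax (d q x) (Rmax (d q (T q)) s) <= k * s) by (apply Rmult_le_compat_l; lra).
      nra. }
  assert (s <= delta) by nra. lra.
Qed.

Lemma bp_T {X : Type} (d : X -> X -> R) A B T k delta x :
  Hy d A B T k delta -> (A x \/ B x) -> d x (T x) = delta -> d (T x) (T (T x)) = delta.
Proof.
  intros H Hx Hxd. pose proof H as [_ [_ [Hk _]]].
  pose proof (D_decay d A B T k delta x H Hx 1) as H1. simpl in H1.
  rewrite Hxd in H1.
  assert (delta <= d (T x) (T (T x))).
  { eapply opp_dist; eauto. eapply opp_T; eauto. eapply opp_self; eauto. }
  lra.
Qed.

Lemma bp_uniq {X : Type} (d : X -> X -> R) A B T k delta x x' :
  Hy d A B T k delta -> BUC d A B -> A x -> A x' ->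
  d x (T x) = delta -> d x' (T x') = delta -> x = x'.
Proof.
  intros H Hbuc Ax Ax' Hx Hx'.
  pose proof H as [[m1 [m2 [m3 m4]]] [[c1 c2] [Hk [Hdist Hc]]]].
  assert (Hbc : forall a : X, bounded_seq d (fun _ => a)) by (intro a; exists 0; intros; rewrite (proj2 (m2 a a) eq_refl); lra).
  assert (Hfix : forall y, A y -> d y (T y) = delta -> T (T y) = y).
  { intros y Ay Hy'. pose proof (bp_T d A B T k delta y H (or_introl Ay) Hy') as H2.
    pose proof (Hbuc delta Hdist (fun _ => y) (fun _ => T (T y)) (fun _ => T y)
      (Hbc _) (Hbc _) (fun _ => Ay) (fun _ => c2 _ (c1 _ Ay)) (fun _ => c1 _ Ay)) as Hz.
    simpl in Hz. rewrite Hy', m3, H2 in Hz. specialize (Hz (Un_cv_c _) (Un_cv_c _)).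
    apply Un_cv_const in Hz. symmetry. apply m2. auto. }
  pose proof (Hfix x Ax Hx) as Fx. pose proof (Hfix x' Ax' Hx') as Fx'.
  pose proof (bp_T d A B T k delta x H (or_introl Ax) Hx) as Hx2.
  pose proof (bp_T d A B T k delta x' H (or_introl Ax') Hx') as Hx2'.
  set (a := d x (T x')). set (b := d (T x) x').
  assert (Ha : delta <= a) by (eapply opp_dist; eauto; left; split; auto).
  assert (Hb : delta <= b) by (eapply opp_dist; eauto; right; split; auto).
  assert (H1 : a <= k * b + (1 - k) * delta).
  { pose proof (Hc (T x) x' ltac:(right; split; auto)) as Hc1.
    rewrite Hx2, Hx' in Hc1. rewrite Fx in Hc1. fold a b in Hc1.
    assert (Rmax b (Rmax delta delta) <= b) by (apply Rmax_lub; [lra|apply Rmax_lub; lra]).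
    assert (k * Rmax b (Rmax delta delta) <= k * b) by (apply Rmult_le_compat_l; lra). lra. }
  assert (H2 : b <= k * a + (1 - k) * delta).
  { pose proof (Hc x (T x') ltac:(left; split; auto)) as Hc1.
    rewrite Hx, Hx2' in Hc1. rewrite Fx' in Hc1. fold a b in Hc1.
    assert (Rmax a (Rmax delta delta) <= a) by (apply Rmax_lub; [lra|apply Rmax_lub; lra]).
    assert (k * Rmax a (Rmax delta delta) <= k * a) by (apply Rmult_le_compat_l; lra). lra. }
  assert (Haa : a = delta) by nra.
  pose proof (Hbuc delta Hdist (fun _ => x) (fun _ => x') (fun _ => T x')
      (Hbc _) (Hbc _) (fun _ => Ax) (fun _ => Ax') (fun _ => c1 _ Ax')) as Hz.
  simpl in Hz. fold a in Hz. rewrite Haa, Hx' in Hz. specialize (Hz (Un_cv_c _) (Un_cv_c _)).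
  apply Un_cv_const in Hz. apply m2. auto.
Qed.

Theorem theorem33 (X : Type) (d : X -> X -> R) (A B : X -> Prop) (T : X -> X)
  (k delta : R) :
  is_metric d -> complete_metric d ->
  nonempty A -> nonempty B -> closed_subset d A -> closed_subset d B ->
  BUC d A B ->
  cyclic_map A B T ->
  0 < k < 1 ->
  is_dist d A B delta ->
  (forall x y, A x -> B y ->
     d (T x) (T y) <= k * Rmax (d x y) (Rmax (d x (T x)) (d y (T y))) + (1 - k) * delta) ->
  (exists x, A x /\ d x (T x) = delta /\
     (forall x', A x' -> d x' (T x') = delta -> x' = x) /\
     (forall x0, A x0 -> converges d (fun n => Nat.iter (2 * n) T x0) x)) /\
  (exists y, B y /\ d y (T y) = delta) /\
  (BUC d B A -> forall y1 y2, B y1 -> B y2 ->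
     d y1 (T y1) = delta -> d y2 (T y2) = delta -> y1 = y2).
Proof.
  intros Hm Hcomp [x0 Hx0] _ HclA _ Hbuc Hcyc Hk Hdist Hcon.
  assert (H : Hy d A B T k delta).
  { split; [exact Hm|]. split; [exact Hcyc|]. split; [exact Hk|]. split; [exact Hdist|].
    intros p q [[Ap Bq]|[Bp Aq]].
    - apply Hcon; auto.
    - destruct Hm as [_ [_ [m3 _]]]. rewrite m3, (m3 p q).
      rewrite (Rmax_comm (d p (T p))). apply Hcon; auto. }
  destruct (orbit_conv d A B T k delta x0 H Hbuc Hcomp HclA Hx0) as [x [Ax [Hx _]]].
  split; [|split].
  - exists x. split; [auto|]. split; [auto|]. split.
    + intros x' Ax' Hx'. exact (bp_uniq d A B T k delta x' x H Hbuc Ax' Ax Hx' Hx).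
    + intros x1 Ax1.
      destruct (orbit_conv d A B T k delta x1 H Hbuc Hcomp HclA Ax1) as [x'' [Ax'' [Hx'' Hc'']]].
      rewrite <- (bp_uniq d A B T k delta x'' x H Hbuc Ax'' Ax Hx'' Hx). exact Hc''.
  - exists (T x). split; [apply (proj1 Hcyc); auto|].
    exact (bp_T d A B T k delta x H (or_introl Ax) Hx).
  - intros HbucB y1 y2 By1 By2 H1 H2.
    exact (bp_uniq d B A T k delta y1 y2 (Hy_sym _ _ _ _ _ _ H) HbucB By1 By2 H1 H2).
Qed.
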